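(* Let $G=G_{\mathbf E}$ be a multi-GGS group which is not the constant GGS group, and let $g\in G$ be directed along the ray $\overline 0$. Then $g\in B$.
   Context: Let $p$ be an odd prime and $X=\{0,1,\dots,p-1\}$, identified with $\mathbb F_p$. $X^*$ is the $p$-regular rooted tree of finite words over $X$; $\mathrm{Aut}(X^* )$ acts on the right. Sections $g|_v$ are defined by $(vw)^g=v^g\,w^{g|_v}$, and the label $g|^v\in\mathrm{Sym}(X)$ is the permutation by which $g|_v$ acts on one-letter words. $\mathrm{Stab}(1)$ is the stabiliser of all one-letter words and $\psi_1\colon\mathrm{Stab}(1)\to\mathrm{Aut}(X^* )^p$, $g\mapsto(g|_0,\dots,g|_{p-1})$, is an isomorphism. Let $a$ be the rooted automorphism acting as $\sigma=(0\,1\,\cdots\,p-1)$ on the first letter and trivially on the remaining letters. Let $\mathbf E\le\mathbb F_p^{p-1}$ be a subspace of dimension $r\ge1$; $E$ is the $r\times(p-1)$ matrix whose rows form a fixed basis of $\mathbf E$, with columns $\mathbf e_1,\dots,\mathbf e_{p-1}$. For $\mathbf n\in\mathbb F_p^r$, $b^{\mathbf n}\in\mathrm{Stab}(1)$ is the unique automorphism with $\psi_1(b^{\mathbf n})=(b^{\mathbf n},a^{\mathbf n\cdot\mathbf e_1},\dots,a^{\mathbf n\cdot\mathbf e_{p-1}})$; $B=\{b^{\mathbf n}\}$. $G=G_{\mathbf E}$ is generated by $a$ and $B$; it is the constant GGS group if $\mathbf E=\{(\lambda,\dots,\lambda)\mid\lambda\in\mathbb F_p\}$. The ray $\overline0$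 consists of the vertices $0^n$ ($n\ge0$). An automorphism $g$ is directed along $\overline 0$ if it fixes every vertex $0^n$ and $g|^v=\mathrm{id}$ for every vertex $v$ that is not joined by an edge to some vertex $0^n$. *)

(* Defs.v *)
From mathcomp Require Import all_boot all_order all_algebra all_fingroup.
Set Implicit Arguments. Unset Strict Implicit. Unset Printing Implicit Defensive.

(* Automorphisms of the p-regular rooted tree X^* , X = 'I_p = {0,...,p-1},
   are represented by their portraits: g v = g|^v, the label (permutation of X)
   at vertex v.  Permutations act on the right, and mathcomp's perm product
   satisfies (s * t) x = t (s x), matching the right-action convention. *)
Section Tree.
Variable p : nat.
Definition X := 'I_p.
Definition taut := seq X -> {perm X}.

(* image of a word: [actg g u w] is the image of w below a vertex u
   (u is the original prefix). *)
Fixpoint actg (g : taut) (u w : seq X) : seq X :=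
  match w with
  | [::] => [::]
  | x :: w' => (g u x) :: actg g (rcons u x) w'
  end.
Definition act (g : taut) (w : seq X) : seq X := actg g [::] w.

Fixpoint actinvg (g : taut) (u w : seq X) : seq X :=
  match w with
  | [::] => [::]
  | x :: w' => let y := ((g u)^-1)%g x in y :: actinvg g (rcons u y) w'
  end.
Definition actinv (g : taut) (w : seq X) : seq X := actinvg g [::] w.

(* sections: (vw)^g = v^g w^{g|_v} *)
Definition section (g : taut) (v : seq X) : taut := fun w => g (v ++ w).

Definition aut_one : taut := fun _ => 1%g.
(* product gh: first g then h *)
Definition aut_mul (g h : taut) : taut := fun v => (g v * h (act g v))%g.
Definition aut_inv (g : taut) : taut := fun v => ((g (actinv g v))^-1)%g.

Definition aut_eq (g h : taut) : Prop := forall v, g v = h v.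

Inductive generated (S : taut -> Prop) : taut -> Prop :=
  | gen_base g : S g -> generated S g
  | gen_one : generated S aut_one
  | gen_mul g h : generated S g -> generated S h -> generated S (aut_mul g h)
  | gen_inv g : generated S g -> generated S (aut_inv g)
  | gen_ext g h : generated S g -> aut_eq g h -> generated S h.

Definition sigma : {perm X} := perm (@ordS_inj p).

Definition a_pow (k : nat) : taut :=
  fun v => if v is [::] then (sigma ^+ k)%g else 1%g.
Definition a : taut := a_pow 1.

(* b^n with psi_1(b^n) = (b^n, a^{n.e_1}, ..., a^{n.e_{p-1}}); letter x <> 0
   corresponds to column x-1 of E. *)
Fixpoint b_pow (r : nat) (E : 'M['F_p]_(r, p.-1)) (n : 'rV['F_p]_r)
    (v : seq X) : {perm X} :=
  match v with
  | [::] => 1%g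
  | x :: w =>
      if val x == 0%N then b_pow E n w
      else match (insub (val x).-1 : option 'I_(p.-1)) with
           | Some j => a_pow (nat_of_ord ((n *m E)%R ord0 j)) w
           | None => 1%g
           end
  end.

Definition in_B r (E : 'M['F_p]_(r, p.-1)) (g : taut) : Prop :=
  exists n : 'rV['F_p]_r, aut_eq g (b_pow E n).

Definition in_G r (E : 'M['F_p]_(r, p.-1)) (g : taut) : Prop :=
  generated (fun h => h = a \/ exists n : 'rV['F_p]_r, h = b_pow E n) g.

Definition zero_letter : option X := insub 0%N.
Definition ray_vertex (n : nat) : seq X :=
  if zero_letter is Some z then nseq n z else [::].

Definition tree_adj (v w : seq X) : Prop :=
  (exists x, w = rcons v x) \/ (exists x, v = rcons w x).

Definition directed_along_ray (g : taut) : Prop :=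
  (forall n, act g (ray_vertex n) = ray_vertex n) /\
  (forall v, ~ (exists n, tree_adj v (ray_vertex n)) -> g v = 1%g).

(* the subspace of constant vectors {(l,...,l)} *)
Definition const_space : 'M['F_p]_(1, p.-1) := const_mx 1%R.
End Tree.

(* Main.v *)
Require Import Defs.
From mathcomp Require Import all_boot all_order all_algebra all_fingroup.
From Stdlib Require Import FunctionalExtensionality.
From mathcomp Require Import zify.
Set Implicit Arguments. Unset Strict Implicit. Unset Printing Implicit Defensive.
Section Basic.
Variable p : nat.
Implicit Types (g h k : taut p) (u v w c : seq (X p)).

Lemma size_actg g u w : size (actg g u w) = size w.
Proof. by elim: w u => //= x w IH u; rewrite IH. Qed.

Lemma actg_rcons g c u x :
  actg g c (rcons u x) = rcons (actg g c u) (g (c ++ u) x).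
Proof.
elim: u c => [|y u IH] c /=; first by rewrite cats0.
by rewrite IH cat_rcons.
Qed.

Lemma act_rcons g u x :
  Defs.act g (rcons u x) = rcons (Defs.act g u) (g u x).
Proof. by rewrite /Defs.act actg_rcons. Qed.

Lemma actg_mul g h u w :
  actg (aut_mul g h) u w = actg h (Defs.act g u) (actg g u w).
Proof.
elim: w u => [|x w IH] u //=.
by rewrite IH act_rcons /aut_mul permM.
Qed.

Lemma act_mul g h v : Defs.act (aut_mul g h) v = Defs.act h (Defs.act g v).
Proof. by rewrite /Defs.act actg_mul. Qed.

Lemma aut_mulA g h k : aut_mul g (aut_mul h k) = aut_mul (aut_mul g h) k.
Proof.
apply: functional_extensionality => v.
by rewrite /aut_mul act_mul mulgA.
Qed.

Lemma actg_one u w : actg (@aut_one p) u w = w.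
Proof. by elim: w u => [|x w IH] u //=; rewrite IH perm1. Qed.

Lemma aut_mul1g g : aut_mul (@aut_one p) g = g.
Proof.
apply: functional_extensionality => v.
by rewrite /aut_mul /Defs.act actg_one /aut_one mul1g.
Qed.

Lemma aut_mulg1 g : aut_mul g (@aut_one p) = g.
Proof. by apply: functional_extensionality => v; rewrite /aut_mul /aut_one mulg1. Qed.

Lemma actg_actinvg g u w : actg g u (actinvg g u w) = w.
Proof.
elim: w u => [|x w IH] u //=.
by rewrite IH permKV.
Qed.

Lemma act_actinv g v : Defs.act g (actinv g v) = v.
Proof. exact: actg_actinvg. Qed.

Lemma aut_inv_uniq g h : aut_mul g h = @aut_one p -> h = aut_inv g.
Proof.
move=> H; apply: functional_extensionality => v.
have := congr1 (fun f => f (actinv g v)) H.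
rewrite /aut_mul /aut_one act_actinv /aut_inv => E.
by rewrite -[h v](mulKg (g (actinv g v))) E mulg1.
Qed.

Lemma actg_section g u c w : actg (section g u) c w = actg g (u ++ c) w.
Proof.
elim: w c => [|x w IH] c //=.
by rewrite IH /section rcons_cat.
Qed.

Lemma actg_sec g u w : actg g u w = Defs.act (section g u) w.
Proof. by rewrite /Defs.act actg_section cats0. Qed.

Lemma section_mul g h x :
  section (aut_mul g h) [:: x] =
  aut_mul (section g [:: x]) (section h [:: g [::] x]).
Proof.
apply: functional_extensionality => u.
by rewrite /section /aut_mul /= {1}/Defs.act /= actg_sec.
Qed.

Lemma aut_mul_nil g h : aut_mul g h [::] = (g [::] * h [::])%g.
Proof. by []. Qed.

Lemma size_act g v : size (Defs.act g v) = size v.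
Proof. exact: size_actg. Qed.

End Basic.
Section Sig.
Variable p : nat.
Hypothesis hp : prime p.

Lemma sigma_val k (x : X p) : val (((sigma p) ^+ k)%g x) = (x + k) %% p.
Proof.
elim: k => [|k IH]; first by rewrite expg0 perm1 addn0 modn_small.
rewrite expgSr permM /sigma permE /= IH.
by rewrite -addn1 modnDml addn1 addnS.
Qed.

Lemma sigma_mod k : ((sigma p) ^+ k)%g = ((sigma p) ^+ (k %% p))%g.
Proof.
apply/permP => x; apply: val_inj.
by rewrite !sigma_val modnDmr.
Qed.

Lemma sigma_eq1 k : ((sigma p) ^+ k)%g = 1%g <-> k %% p = 0.
Proof.
split=> [H|H]; last by rewrite sigma_mod H expg0.
have p0 : 0 < p by exact: prime_gt0.
have := congr1 (fun s : {perm X p} => val (s (Ordinal p0))) H.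
by rewrite sigma_val perm1 /= add0n.
Qed.
End Sig.

Import GRing.Theory.

Section Words.
Variables (p r : nat) (E : 'M['F_p]_(r, p.-1)).
Hypothesis hp : prime p.

Inductive letter := La of nat | Lb of 'rV['F_p]_r.

Definition leval (l : letter) : taut p :=
  match l with La k => @a_pow p k | Lb n => b_pow E n end.

Definition eval (w : seq letter) : taut p :=
  foldr (fun l g => aut_mul (leval l) g) (@aut_one p) w.

Definition colv (n : 'rV['F_p]_r) (c : nat) : 'F_p :=
  match (insub c.-1 : option 'I_(p.-1)) with
  | Some j => (n *m E)%R ord0 j | None => 0%R end.

Definition sec (l : letter) (x : X p) : seq letter :=
  match l with
  | La _ => [::]
  | Lb n => if val x == 0 then [:: Lb n]
            else match (insub (val x).-1 : option 'I_(p.-1)) with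
                 | Some j => [:: La (nat_of_ord ((n *m E)%R ord0 j))]
                 | None => [::] end
  end.

Fixpoint comp (w : seq letter) (x : X p) : seq letter :=
  match w with
  | [::] => [::]
  | l :: w' => sec l x ++ comp w' (leval l [::] x)
  end.

Definition cntB (w : seq letter) : nat :=
  foldr (fun l c => match l with La _ => c | Lb _ => c.+1 end) 0 w.
Definition epsA (w : seq letter) : nat :=
  foldr (fun l c => match l with La k => k + c | Lb _ => c end) 0 w.
Definition epsB (w : seq letter) : 'rV['F_p]_r :=
  foldr (fun l c => match l with La _ => c | Lb n => n + c end)%R 0%R w.

Lemma cntB_cat w1 w2 : cntB (w1 ++ w2) = cntB w1 + cntB w2.
Proof. by elim: w1 => [|[k|n] w1 IH] //=; rewrite IH. Qed.
Lemma epsA_cat w1 w2 : epsA (w1 ++ w2) = epsA w1 + epsA w2.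
Proof. by elim: w1 => [|[k|n] w1 IH] //=; rewrite IH addnA. Qed.
Lemma epsB_cat w1 w2 : epsB (w1 ++ w2) = (epsB w1 + epsB w2)%R.
Proof.
elim: w1 => [|l w1 IH]; first by rewrite /= add0r.
by case: l => [k|n] /=; rewrite IH ?addrA.
Qed.

Lemma epsB_cnt0 w : cntB w = 0 -> epsB w = 0%R.
Proof. by elim: w => [|[k|n] w IH] //=. Qed.

Lemma eval_cat w1 w2 : eval (w1 ++ w2) = aut_mul (eval w1) (eval w2).
Proof.
elim: w1 => [|l w1 IH] /=; first by rewrite aut_mul1g.
by rewrite IH aut_mulA.
Qed.

Lemma eval1 l : eval [:: l] = leval l.
Proof. by rewrite /= aut_mulg1. Qed.

Lemma eval_root w : eval w [::] = ((sigma p) ^+ (epsA w))%g.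
Proof.
elim: w => [|[k|n] w IH] /=; first by rewrite expg0.
  by rewrite aut_mul_nil IH /= expgD.
by rewrite aut_mul_nil IH /= mul1g.
Qed.

Lemma section_leval l x : section (leval l) [:: x] = eval (sec l x).
Proof.
case: l => [k|n] /=; first by apply: functional_extensionality.
case: ifP => H; first by rewrite eval1; apply: functional_extensionality => u; rewrite /section /= H.
case E0: insub => [j|]; rewrite ?eval1; apply: functional_extensionality => u;
  by rewrite /section /= H E0.
Qed.

Lemma eval_section w x : section (eval w) [:: x] = eval (comp w x).
Proof.
elim: w x => [|l w IH] x /=; first by [].
by rewrite section_mul IH section_leval eval_cat.
Qed.

Lemma leval_root_perm l : exists s : {perm X p}, leval l [::] = s.
Proof. by exists (leval l [::]). Qed.

Definition z : X p := Ordinal (prime_gt0 hp).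

Lemma val_eq0 (x : X p) : (val x == 0) = (x == z).
Proof. by rewrite -(inj_eq val_inj). Qed.

Lemma sum_ifz_nat (c : nat) : \sum_(x : X p) (if val x == 0 then c else 0) = c.
Proof.
rewrite (bigD1 z) //= ?eqxx big1 ?addn0 // => y.
by rewrite val_eq0 => /negbTE ->.
Qed.

Lemma sum_ifz_rv (c : 'rV['F_p]_r) :
  (\sum_(x : X p) (if val x == 0 then c else 0) = c)%R.
Proof.
rewrite (bigD1 z) //= ?eqxx big1 ?addr0 // => y.
by rewrite val_eq0 => /negbTE ->.
Qed.

Lemma cntB_secb n x : cntB (sec (Lb n) x) = (val x == 0).
Proof. by rewrite /=; case: ifP => // _; case: (insub x.-1 : option 'I_(p.-1)). Qed.
Lemma epsB_secb n x : epsB (sec (Lb n) x) = if val x == 0 then n else 0%R.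
Proof. rewrite /=; case: (val x == 0) => /=; first by rewrite addr0.
by case: (insub x.-1 : option 'I_(p.-1)). Qed.
Lemma epsA_secb n x :
  ((epsA (sec (Lb n) x))%:R : 'F_p)%R = if val x == 0 then 0%R else colv n (val x).
Proof.
rewrite /= /colv; case: ifP => _ //.
case: (insub _ : option 'I_(p.-1)) => [j|] //=.
by rewrite addn0 natr_Zp.
Qed.

Lemma sum_cntB w : \sum_(x : X p) cntB (comp w x) = cntB w.
Proof.
elim: w => [|l w IH] /=; first by rewrite big1.
under eq_bigr do rewrite cntB_cat.
rewrite big_split /=.
rewrite -(reindex_inj (h := leval l [::]) (P := xpredT) (F := fun y => cntB (comp w y)) (@perm_inj _ _)) IH.
case: l => [k|n] /=; first by rewrite big1.
under eq_bigr do rewrite cntB_secb.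
by rewrite (sum_ifz_nat 1) add1n.
Qed.

Lemma sum_epsB w : (\sum_(x : X p) epsB (comp w x))%R = epsB w.
Proof.
elim: w => [|l w IH] /=; first by rewrite big1.
under eq_bigr do rewrite epsB_cat.
rewrite big_split /=.
rewrite -(reindex_inj (h := leval l [::]) (P := xpredT) (F := fun y => epsB (comp w y)) (@perm_inj _ _)) IH.
case: l => [k|n] /=; first by rewrite big1 ?add0r.
under eq_bigr do rewrite epsB_secb.
by rewrite sum_ifz_rv.
Qed.

Definition dd (x y : X p) : nat := (val x + p.-1 * val y) %% p.

Lemma colvD (n m : 'rV['F_p]_r) c : colv (n + m)%R c = (colv n c + colv m c)%R.
Proof. rewrite /colv; case: (insub c.-1 : option 'I_(p.-1)) => [j|]; last by rewrite addr0.
by rewrite mulmxDl mxE. Qed.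

Lemma colv0 c : colv 0%R c = 0%R.
Proof. rewrite /colv; case: (insub c.-1 : option 'I_(p.-1)) => [j|] //.
by rewrite mul0mx mxE. Qed.

Lemma dd_sigma k (x y : X p) :
  dd (((sigma p) ^+ k)%g x) (((sigma p) ^+ k)%g y) = dd x y.
Proof.
rewrite /dd !sigma_val modnDml -modnDmr modnMmr modnDmr.
have p0 : 0 < p := prime_gt0 hp.
have -> : x + k + p.-1 * (y + k) = (x + p.-1 * y) + k * p.
  move: (val x) (val y) (prednK p0) => a b; move: (p.-1) => q <-; lia.
by rewrite addnC modnMDl.
Qed.

Lemma epsA_comp w x :
  ((epsA (comp w x))%:R : 'F_p)%R =
  (\sum_(y | y != x) colv (epsB (comp w y)) (dd x y))%R.
Proof.
elim: w x => [|l w IH] x /=; first by rewrite big1 // => y _; rewrite colv0.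
case: l => [k|n] /=.
  rewrite IH (reindex_inj (h := ((sigma p) ^+ k)%g) (@perm_inj _ _)) /=.
  by apply: eq_big => [y|y _]; rewrite ?(inj_eq (@perm_inj _ _)) ?dd_sigma.
rewrite perm1 epsA_cat natrD IH.
under [in RHS]eq_bigr do rewrite perm1.
under [in RHS]eq_bigr do rewrite epsB_cat colvD.
rewrite big_split /= epsA_secb; congr (_ + _)%R.
under eq_bigr do rewrite epsB_secb.
case: ifP => Hx.
  rewrite big1 // => y Hy; case: ifP => Hy0; last by rewrite colv0.
  by move: Hy; rewrite -(inj_eq val_inj) (eqP Hx) Hy0.
have zx : z != x by rewrite eq_sym -val_eq0 Hx.
rewrite (bigD1 z) //= big1 ?addr0.
  by rewrite /dd muln0 addn0 modn_small // ltn_ord.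
move=> y /andP [_ Hyz]; have -> : (nat_of_ord y == 0) = false.
  by apply/negbTE; move: Hyz; apply: contra => /eqP H; apply/eqP/val_inj.
exact: colv0.
Qed.

Lemma F3single w x0 y :
  (forall y', y' != x0 -> epsB (comp w y') = 0%R) -> y != x0 ->
  ((epsA (comp w y))%:R : 'F_p)%R = colv (epsB (comp w x0)) (dd y x0).
Proof.
move=> H yx; rewrite epsA_comp (bigD1 x0) 1?eq_sym //= big1 ?addr0 // => y' /andP [_ Hy'].
by rewrite H // colv0.
Qed.

Lemma dd_self x : dd x x = 0.
Proof.
have p0 : 0 < p := prime_gt0 hp.
rewrite /dd -{1}(mul1n (val x)) -mulnDl add1n prednK //.
exact: modnMr.
Qed.

Lemma col_hit x0 (j : 'I_(p.-1)) : exists y, y != x0 /\ dd y x0 = j.+1.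
Proof.
have p0 : 0 < p := prime_gt0 hp.
have jp : j.+1 < p by have := ltn_ord j; lia.
pose y : X p := Ordinal (ltn_pmod (val x0 + j.+1) p0).
have Hd : dd y x0 = j.+1.
  rewrite /dd /= modnDml -addnA (addnC j.+1) addnA -{1}(mul1n (val x0)) -mulnDl add1n prednK //.
  by rewrite mulnC modnMDl modn_small.
exists y; split=> //; apply/eqP => E0; move: Hd; rewrite E0 dd_self //.
Qed.

Lemma colv_col N (j : 'I_(p.-1)) : colv N j.+1 = (N *m E)%R ord0 j.
Proof.
rewrite /colv /= insubT //= => Hj.
by congr ((N *m E)%R ord0 _); apply: val_inj.
Qed.

Hypothesis hE : row_free E.

Lemma colv_zero N : (forall j : 'I_(p.-1), colv N j.+1 = 0%R) -> N = 0%R.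
Proof.
move=> H; apply: (row_free_inj hE); rewrite mul0mx; apply/rowP => j.
by rewrite -colv_col H mxE.
Qed.

Lemma natFp0 k : k %% p = 0 -> ((k%:R : 'F_p) = 0)%R.
Proof. by move=> H; rewrite -(Fp_nat_mod hp) H. Qed.

Lemma single_col w x0 :
  (forall y, y != x0 -> epsB (comp w y) = 0%R) ->
  (forall y, y != x0 -> epsA (comp w y) %% p = 0) ->
  epsB (comp w x0) = 0%R.
Proof.
move=> HB HA; apply: colv_zero => j.
have [y [yx Hd]] := col_hit x0 j.
by rewrite -Hd -F3single // natFp0 // HA.
Qed.

Lemma eval_one_epsA w : eval w = @aut_one p -> epsA w %% p = 0.
Proof.
move=> H; have := congr1 (fun f => f [::]) H.
by rewrite /= eval_root => /(sigma_eq1 hp).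
Qed.

Lemma section_one x : section (@aut_one p) [:: x] = @aut_one p.
Proof. by apply: functional_extensionality. Qed.

Lemma W m w : cntB w <= m -> eval w = @aut_one p -> epsB w = 0%R.
Proof.
elim: m w => [|m IH] w Hc He.
  by apply: epsB_cnt0; move: Hc; rewrite leqn0 => /eqP.
have Hsec x : eval (comp w x) = @aut_one p by rewrite -eval_section He section_one.
case: (leqP (cntB w) m) => [Hm|Hm]; first exact: IH.
have Hcw : cntB w = m.+1 by apply/eqP; rewrite eqn_leq Hc Hm.
rewrite -sum_epsB.
case: (boolP [exists x, cntB (comp w x) == m.+1]) => [/existsP [x0 /eqP Hx0]|Hn].
  have Hz y : y != x0 -> cntB (comp w y) = 0.
    move=> yx; have := sum_cntB w; rewrite (bigD1 x0) //= Hx0 Hcw.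
    move/eqP; rewrite -{2}(addn0 m.+1) eqn_add2l sum_nat_eq0 => /forallP /(_ y).
    by rewrite yx => /eqP.
  have HB y : y != x0 -> epsB (comp w y) = 0%R by move=> yx; apply: epsB_cnt0; exact: Hz.
  have HA y : y != x0 -> epsA (comp w y) %% p = 0 by move=> _; apply: eval_one_epsA.
  have H0 := single_col HB HA.
  rewrite big1 // => y _; case: (eqVneq y x0) => [->|yx]; [exact: H0 | exact: HB].
rewrite big1 // => x _; apply: IH (Hsec x).
have : cntB (comp w x) <= m.+1.
  by rewrite -Hcw -(sum_cntB w) (bigD1 x) //= leq_addr.
rewrite leq_eqVlt ltnS => /orP [/eqP E0|//].
by move: Hn; rewrite negb_exists => /forallP /(_ x); rewrite E0 eqxx.
Qed.

Lemma a_pow_cons k x u : @a_pow p k (x :: u) = 1%g.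
Proof. by []. Qed.

Lemma a_pow_mul k m : aut_mul (@a_pow p k) (@a_pow p m) = @a_pow p (k + m).
Proof.
apply: functional_extensionality => [[|x u]]; first by rewrite aut_mul_nil /= expgD.
by rewrite /aut_mul /Defs.act /= mul1g.
Qed.

Lemma a_pow_p k : k %% p = 0 -> @a_pow p k = @aut_one p.
Proof.
move=> H; apply: functional_extensionality => [[|x u]] //=.
by apply/(sigma_eq1 hp).
Qed.

Lemma a_pow_inv k : aut_mul (@a_pow p k) (@a_pow p (p.-1 * k)) = @aut_one p.
Proof.
rewrite a_pow_mul a_pow_p //.
have p0 : 0 < p := prime_gt0 hp.
rewrite -{1}(mul1n k) -mulnDl add1n prednK //; exact: modnMr.
Qed.

Lemma section_b0 n (x : X p) : val x == 0 -> section (b_pow E n) [:: x] = b_pow E n.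
Proof. by move=> H; apply: functional_extensionality => u; rewrite /section /= H. Qed.

Lemma bL n m v : b_pow E m (Defs.act (b_pow E n) v) = b_pow E m v.
Proof.
elim: v => [|x u IH] //.
rewrite {1}/Defs.act /= perm1 actg_sec.
case: ifP => Hx; first by rewrite section_b0 ?Hx.
case: (insub x.-1 : option 'I_(p.-1)) => [j|] //.
move: (section (b_pow E n) [:: x]) => h.
by case: u {IH} => [|y u].
Qed.

Lemma Fp_add_val (c d : 'F_p) : nat_of_ord (c + d)%R = (nat_of_ord c + nat_of_ord d) %% p.
Proof. by rewrite -{1}(natr_Zp c) -{1}(natr_Zp d) -natrD (val_Fp_nat hp). Qed.

Lemma bP n m v : (b_pow E n v * b_pow E m v)%g = b_pow E (n + m)%R v.
Proof.
elim: v => [|x u IH] /=; first by rewrite mulg1.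
case: ifP => Hx //.
case: (insub x.-1 : option 'I_(p.-1)) => [j|]; last by rewrite mulg1.
case: u {IH} => [|y u] /=; last by rewrite mulg1.
rewrite -expgD mulmxDl.
have -> : ((n *m E + m *m E) ord0 j = (n *m E) ord0 j + (m *m E) ord0 j)%R by rewrite !mxE.
by rewrite Fp_add_val -sigma_mod.
Qed.

Lemma b_mul n m : aut_mul (b_pow E n) (b_pow E m) = b_pow E (n + m)%R.
Proof. by apply: functional_extensionality => v; rewrite /aut_mul bL bP. Qed.

Lemma b_zero : b_pow E 0%R = @aut_one p.
Proof.
apply: functional_extensionality; elim => [|x u IH] //=.
case: ifP => Hx //.
case: (insub x.-1 : option 'I_(p.-1)) => [j|] //.
by rewrite mul0mx mxE; case: u {IH}.
Qed.

Definition linv (l : letter) : letter :=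
  match l with La k => La (p.-1 * k) | Lb n => Lb (- n)%R end.

Lemma leval_inv l : aut_mul (leval l) (leval (linv l)) = @aut_one p.
Proof. case: l => [k|n] /=; first exact: a_pow_inv. by rewrite b_mul subrr b_zero. Qed.

Definition winv (w : seq letter) : seq letter := rev (map linv w).

Lemma eval_winv w : aut_mul (eval w) (eval (winv w)) = @aut_one p.
Proof.
elim: w => [|l w IH] /=; first by rewrite aut_mul1g.
rewrite /winv map_cons rev_cons -cats1 eval_cat eval1.
by rewrite -!aut_mulA (aut_mulA (eval w)) IH aut_mul1g leval_inv.
Qed.

Lemma G_words g : in_G E g -> exists w, g = eval w.
Proof.
elim => [h [->|[n ->]]| |g1 h1 _ [w1 ->] _ [w2 ->]|g1 _ [w1 ->]|g1 h1 _ [w1 ->] He].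
- by exists [:: La 1]; rewrite eval1.
- by exists [:: Lb n]; rewrite eval1.
- by exists [::].
- by exists (w1 ++ w2); rewrite eval_cat.
- by exists (winv w1); apply/esym/aut_inv_uniq/eval_winv.
- by exists w1; apply: functional_extensionality => v; rewrite -He.
Qed.

Lemma zero_letterE : zero_letter p = Some z.
Proof. rewrite /zero_letter insubT /=; first exact: prime_gt0.
by move=> H; congr Some; apply: val_inj. Qed.

Lemma ray_vertexE n : ray_vertex p n = nseq n z.
Proof. by rewrite /ray_vertex zero_letterE. Qed.

Lemma adj_cons (v : seq (X p)) :
  (exists m, tree_adj (z :: v) (nseq m z)) -> exists m, tree_adj v (nseq m z).
Proof.
case=> m [[x Hx]|[x Hx]].
- case: m Hx => [|m] /= Hx; first by [].
  by case: Hx => Hm; exists m; left; exists x.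
- case: m Hx => [|m] /= Hx.
    by case: Hx => _ ->; exists 1; left; exists z.
  by case: Hx => Hv; exists m; right; exists x.
Qed.

Lemma nonadj (y : X p) u : y != z -> u != [::] ->
  ~ (exists m, tree_adj (y :: u) (nseq m z)).
Proof.
move=> yz u0 [m [[x Hx]|[x Hx]]].
- case: m Hx => [|m] /= Hx; first by [].
  by case: Hx => Hy; rewrite Hy eqxx in yz.
- case: m Hx => [|m] /= Hx.
    by case: Hx => _ Hu; rewrite Hu in u0.
  by case: Hx => Hy; rewrite Hy eqxx in yz.
Qed.

Lemma dir_section g : directed_along_ray g -> g [::] z = z ->
  directed_along_ray (section g [:: z]).
Proof.
move=> [H1 H2] Hz; split.
  move=> n; rewrite ray_vertexE; have := H1 n.+1; rewrite ray_vertexE /=.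
  by rewrite /Defs.act /= Hz actg_sec => - [].
move=> v Hv; rewrite /section /=; apply: H2 => - [m Hm].
apply: Hv; have [m' Hm'] : exists m, tree_adj (z :: v) (nseq m z).
  by exists m; rewrite -ray_vertexE.
have [m'' Hm''] := adj_cons (ex_intro _ m' Hm').
by exists m''; rewrite ray_vertexE.
Qed.

Lemma dir_nz g (y : X p) u : directed_along_ray g -> y != z -> u != [::] ->
  g (y :: u) = 1%g.
Proof.
move=> [_ H2] yz u0; apply: H2 => - [m Hm]; apply: (nonadj yz u0).
by exists m; rewrite -ray_vertexE.
Qed.

Lemma dir_epsA w : directed_along_ray (eval w) -> epsA w %% p = 0.
Proof.
move=> [H1 _]; have := H1 1; rewrite ray_vertexE /Defs.act /= eval_root => - [Hz].
by have := congr1 val Hz; rewrite sigma_val.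
Qed.

Lemma dir_root w : directed_along_ray (eval w) -> eval w [::] z = z.
Proof. by move=> Hd; rewrite eval_root; apply/eqP; rewrite (proj2 (sigma_eq1 hp _) (dir_epsA Hd)) perm1. Qed.

Lemma dir_B0 w y : directed_along_ray (eval w) -> y != z -> epsB (comp w y) = 0%R.
Proof.
move=> Hd yz.
have Ha : eval (comp w y) = @a_pow p (epsA (comp w y)).
  apply: functional_extensionality => - [|x u]; first by rewrite eval_root.
  by rewrite -eval_section /section /= (dir_nz Hd yz).
have He : eval (comp w y ++ [:: La (p.-1 * epsA (comp w y))]) = @aut_one p.
  by rewrite eval_cat eval1 Ha /= a_pow_inv.
by have := W (leqnn _) He; rewrite epsB_cat /= addr0.
Qed.

Lemma dir_Bz w : directed_along_ray (eval w) -> epsB (comp w z) = epsB w.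
Proof.
move=> Hd; rewrite -[RHS]sum_epsB (bigD1 z) //= big1 ?addr0 // => y yz.
exact: dir_B0.
Qed.

Lemma b_pow_cons n x v : b_pow E n (x :: v) =
  if val x == 0 then b_pow E n v
  else match (insub (val x).-1 : option 'I_(p.-1)) with
       | Some j => a_pow (nat_of_ord ((n *m E)%R ord0 j)) v
       | None => 1%g end.
Proof. by []. Qed.

Lemma main_dir v : forall w, directed_along_ray (eval w) ->
  eval w v = b_pow E (epsB w) v.
Proof.
elim: v => [|x v IH] w Hd.
  by rewrite eval_root; apply/(sigma_eq1 hp)/dir_epsA.
have -> : eval w (x :: v) = eval (comp w x) v by rewrite -eval_section.
rewrite b_pow_cons; case: ifP => Hx.
  have xz : x = z by apply/val_inj/eqP.
  subst x; rewrite IH ?(dir_Bz Hd) //.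
  by rewrite -eval_section; apply: dir_section => //; exact: dir_root.
have xz : x != z by rewrite -val_eq0 Hx.
case: v {IH} => [|y u]; last first.
  rewrite -eval_section /section (dir_nz Hd xz) //.
  by case: (insub x.-1 : option 'I_(p.-1)).
rewrite eval_root.
have H3 := F3single (x0 := z) (fun y' => dir_B0 Hd) xz.
rewrite (dir_Bz Hd) /dd muln0 addn0 modn_small ?ltn_ord // /colv in H3.
case: (insub x.-1 : option 'I_(p.-1)) H3 => [j|] H3.
  rewrite /= [RHS]sigma_mod [LHS]sigma_mod -!(val_Fp_nat hp) H3.
  by rewrite natr_Zp.
by apply/(sigma_eq1 hp); rewrite -(val_Fp_nat hp) H3.
Qed.

End Words.

Theorem mainTheorem14 (p : nat) (hp : prime p) (hodd : odd p)
    (r : nat) (hr : (0 < r)%N) (E : 'M['F_p]_(r, p.-1))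
    (hE : row_free E)
    (hnc : ~~ (E == const_space p)%MS)
    (g : taut p) (hg : in_G E g) (hdir : directed_along_ray g) :
  in_B E g.
Proof.
have [w Hw] := G_words hp hg.
subst g; exists (epsB w) => v.
exact: (main_dir hp hE v hdir).
Qed.
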